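(* For every context $\Gamma$, terms $M,N,A,B$ and variable $x$: if $\Gamma,x:A\vdash M:B$ and $\Gamma\vdash N:A$, then $\Gamma\vdash M[x:=N]:B[x:=N]$.
   Context: Let $\mathcal V$ (the variables) be a type with decidable equality, equipped with functions $\mathrm{encode}:\mathcal V\to\mathbb N$ and $\mathrm{decode}:\mathbb N\to\mathcal V$ such that $\mathrm{encode}(\mathrm{decode}\,n)=n$ for all $n$. Let $\mathcal C$ (the constants) be any type. Terms $\Lambda$ are generated by: $c\,k$ ($k\in\mathcal C$), $v\,x$ ($x\in\mathcal V$), $\lambda[x:A]M$, $\Pi[x:A]B$ and $M\cdot N$; in $\lambda[x:A]M$ and $\Pi[x:A]B$ the name $x$ binds in $M$ (resp. $B$) but not in $A$. Terms are raw first-order syntax (not identified up to renaming of bound variables) and $\equiv$ denotes syntactic identity. The list of free variables is $\mathrm{fv}(c\,k)=[\,]$, $\mathrm{fv}(v\,x)=[x]$, $\mathrm{fv}(\lambda[x:A]M)=\mathrm{fv}\,A\mathbin{+\!\!+}(\mathrm{fv}\,M-x)$, $\mathrm{fv}(\Pi[x:A]B)=\mathrm{fv}\,A\mathbin{+\!\!+}(\mathrm{fv}\,B-x)$, $\mathrm{fv}(M\cdot N)=\mathrm{fv}\,M\mathbin{+\!\!+}\mathrm{fv}\,N$, where $\mathbin{+\!\!+}$ is list concatenation and $xs-x$ deletes every occurrence of $x$ from $xs$. Fix a function $\chi':\mathrm{List}\,\mathbb N\to\mathbb N$ with $\chi'(ns)\notin ns$ for every list $ns$, and put $X'(xs)=\mathrm{decode}(\chi'(\mathrm{map}\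 \mathrm{encode}\ xs))$. A substitution is any function $\sigma:\mathcal V\to\Lambda$; $\iota=v$ is the identity substitution; $(\sigma,x:=N)(y)=N$ if $y=x$ and $\sigma\,y$ otherwise. For a substitution $\sigma$ and a list $xs$ of variables, $X(\sigma,xs)=X'(\text{concatenation of the lists }\mathrm{fv}(\sigma\,y)\text{ for }y\in xs)$. The action $M\bullet\sigma$ is defined by structural recursion: $c\,k\bullet\sigma=c\,k$; $v\,x\bullet\sigma=\sigma\,x$; $(M\cdot N)\bullet\sigma=(M\bullet\sigma)\cdot(N\bullet\sigma)$; $(\lambda[x:A]M)\bullet\sigma=\lambda[y:A\bullet\sigma](M\bullet(\sigma,x:=v\,y))$ with $y=X(\sigma,\mathrm{fv}\,M-x)$; $(\Pi[x:A]B)\bullet\sigma=\Pi[y:A\bullet\sigma](B\bullet(\sigma,x:=v\,y))$ with $y=X(\sigma,\mathrm{fv}\,B-x)$. Unary substitution is $M[x:=N]=M\bullet(\iota,x:=N)$. $\alpha$-conversion $\sim_\alpha$ is the inductively defined relation with rules: $c\,k\sim_\alpha c\,k$; $v\,x\sim_\alpha v\,x$; $M\cdot N\sim_\alpha M'\cdot N'$ if $M\sim_\alpha M'$ and $N\sim_\alpha N'$; $\lambda[x:A]M\sim_\alpha\lambda[x':A']M'$ if $A\sim_\alpha A'$ and there is a variable $y$ with $y\notin\mathrm{fv}\,M-x$, $y\notin\mathrm{fv}\,M'-x'$ and $M[x:=v\,y]\equiv M'[x':=v\,y]$; and the same rule with $\Pi$ in place of $\lambda$. $\beta$-contraction is $(\lambda[x:A]M)\cdot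 N\ \triangleright_\beta\ M[x:=N]$. One-step $\beta$-reduction $\to_\beta$ is its contextual closure, inductively: $M\to_\beta N$ if $M\triangleright_\beta N$; $\lambda[x:A]M\to_\beta\lambda[x:A]M'$ and $\Pi[x:A]M\to_\beta\Pi[x:A]M'$ if $M\to_\beta M'$; $\lambda[x:A]M\to_\beta\lambda[x:A']M$ and $\Pi[x:A]M\to_\beta\Pi[x:A']M$ if $A\to_\beta A'$; $M\cdot P\to_\beta N\cdot P$ and $P\cdot M\to_\beta P\cdot N$ if $M\to_\beta N$. $\beta$-conversion $\simeq_\beta$ is the equivalence (reflexive–symmetric–transitive) closure of $\sim_\alpha\cup\to_\beta$. Pure Type System: fix a binary relation $\mathcal A\subseteq\mathcal C\times\mathcal C$ (axioms) and a ternary relation $\mathcal R\subseteq\mathcal C\times\mathcal C\times\mathcal C$ (rules). A context is a finite list of pairs $(x,A)$ with $x\in\mathcal V$, $A\in\Lambda$; $\Gamma,x:A$ denotes the list $(x,A)::\Gamma$; $\mathrm{dom}\,\Gamma$ is the list of first components; $(x,A)\in\Gamma$ is list membership. The judgments $\Gamma\ \mathrm{ok}$ and $\Gamma\vdash M:A$ are defined mutually inductively by: (nil) $[\,]\ \mathrm{ok}$; (cons) if $\Gamma\ \mathrm{ok}$, $\Gamma\vdash A:c\,s$ and $x\notin\mathrm{dom}\,\Gamma$ then $\Gamma,x:A\ \mathrm{ok}$; (sort) if $\Gamma\ \mathrm{ok}$ and $\mathcal A\,s_1\,s_2$ then $\Gamma\vdash c\,s_1:c\,s_2$; (var) if $\Gamma\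 \mathrm{ok}$ and $(x,A)\in\Gamma$ then $\Gamma\vdash v\,x:A$; (prod) if $\mathcal R\,s_1\,s_2\,s_3$, $\Gamma\vdash A:c\,s_1$ and for every $y\notin\mathrm{dom}\,\Gamma$, $\Gamma,y:A\vdash B[x:=v\,y]:c\,s_2$, then $\Gamma\vdash\Pi[x:A]B:c\,s_3$; (abs) if $\mathcal R\,s_1\,s_2\,s_3$, $\Gamma\vdash A:c\,s_1$, for every $z\notin\mathrm{dom}\,\Gamma$, $\Gamma,z:A\vdash B[y:=v\,z]:c\,s_2$, and for every $z\notin\mathrm{dom}\,\Gamma$, $\Gamma,z:A\vdash M[x:=v\,z]:B[y:=v\,z]$, then $\Gamma\vdash\lambda[x:A]M:\Pi[y:A]B$; (app) if $\Gamma\vdash M:\Pi[x:A]B$, $\Gamma\vdash N:A$ and $\Gamma\vdash B[x:=N]:c\,s$ for some $s$, then $\Gamma\vdash M\cdot N:B[x:=N]$; (conv) if $\Gamma\vdash M:A$, $A\simeq_\beta B$ and $\Gamma\vdash B:c\,s$ for some $s$, then $\Gamma\vdash M:B$. (The premises quantified over all fresh names in (prod) and (abs) are infinitely branching.) *)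

(* Defs.v *)
From Stdlib Require Import List Relations.
Import ListNotations.
Set Implicit Arguments.

Record VarType := {
  vcar :> Type;
  veq_dec : forall x y : vcar, {x = y} + {x <> y};
  encode : vcar -> nat;
  decode : nat -> vcar;
  encode_decode : forall n, encode (decode n) = n
}.

Section PTS.
Context (V : VarType) (C : Type).

Inductive term : Type :=
| tc : C -> term
| tv : V -> term
| tlam : V -> term -> term -> term
| tpi : V -> term -> term -> term
| tapp : term -> term -> term.

Definition lminus (xs : list V) (x : V) : list V := remove (veq_dec V) x xs.

Fixpoint fv (M : term) : list V :=
  match M with
  | tc _ => []
  | tv x => [x]
  | tlam x A M => fv A ++ lminus (fv M) x
  | tpi x A B => fv A ++ lminus (fv B) x
  | tapp M N => fv M ++ fv N
  end.

Definition subst := V -> term.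
Definition iota : subst := tv.
Definition upd (s : subst) (x : V) (N : term) : subst :=
  fun y => if veq_dec V y x then N else s y.

Section Action.
Context (chi' : list nat -> nat).

Definition X' (xs : list V) : V := decode V (chi' (map (encode V) xs)).
Definition Xs (s : subst) (xs : list V) : V := X' (flat_map (fun y => fv (s y)) xs).

Fixpoint act (s : subst) (M : term) {struct M} : term :=
  match M with
  | tc k => tc k
  | tv x => s x
  | tapp M N => tapp (act s M) (act s N)
  | tlam x A M =>
      let y := Xs s (lminus (fv M) x) in
      tlam y (act s A) (act (upd s x (tv y)) M)
  | tpi x A B =>
      let y := Xs s (lminus (fv B) x) in
      tpi y (act s A) (act (upd s x (tv y)) B)
  end.

Definition usubst (M : term) (x : V) (N : term) : term := act (upd iota x N) M.

Inductive alpha : term -> term -> Prop :=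
| alpha_c : forall k, alpha (tc k) (tc k)
| alpha_v : forall x, alpha (tv x) (tv x)
| alpha_app : forall M N M' N', alpha M M' -> alpha N N' ->
    alpha (tapp M N) (tapp M' N')
| alpha_lam : forall x A M x' A' M' y, alpha A A' ->
    ~ In y (lminus (fv M) x) -> ~ In y (lminus (fv M') x') ->
    usubst M x (tv y) = usubst M' x' (tv y) ->
    alpha (tlam x A M) (tlam x' A' M')
| alpha_pi : forall x A M x' A' M' y, alpha A A' ->
    ~ In y (lminus (fv M) x) -> ~ In y (lminus (fv M') x') ->
    usubst M x (tv y) = usubst M' x' (tv y) ->
    alpha (tpi x A M) (tpi x' A' M').

Inductive beta_contr : term -> term -> Prop :=
| beta_contr_intro : forall x A M N,
    beta_contr (tapp (tlam x A M) N) (usubst M x N).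

Inductive beta : term -> term -> Prop :=
| beta_top : forall M N, beta_contr M N -> beta M N
| beta_lam_body : forall x A M M', beta M M' -> beta (tlam x A M) (tlam x A M')
| beta_pi_body : forall x A M M', beta M M' -> beta (tpi x A M) (tpi x A M')
| beta_lam_dom : forall x A A' M, beta A A' -> beta (tlam x A M) (tlam x A' M)
| beta_pi_dom : forall x A A' M, beta A A' -> beta (tpi x A M) (tpi x A' M)
| beta_appl : forall M N P, beta M N -> beta (tapp M P) (tapp N P)
| beta_appr : forall M N P, beta M N -> beta (tapp P M) (tapp P N).

Definition beta_conv : term -> term -> Prop :=
  clos_refl_sym_trans term (union term alpha beta).

Definition context := list (V * term).
Definition dom (G : context) : list V := map fst G.

Section Typing.
Context (Ax : C -> C -> Prop) (Rl : C -> C -> C -> Prop).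

Inductive wf : context -> Prop :=
| wf_nil : wf []
| wf_cons : forall G x A s, wf G -> typ G A (tc s) -> ~ In x (dom G) ->
    wf ((x, A) :: G)
with typ : context -> term -> term -> Prop :=
| typ_sort : forall G s1 s2, wf G -> Ax s1 s2 -> typ G (tc s1) (tc s2)
| typ_var : forall G x A, wf G -> In (x, A) G -> typ G (tv x) A
| typ_prod : forall G x A B s1 s2 s3, Rl s1 s2 s3 -> typ G A (tc s1) ->
    (forall y, ~ In y (dom G) -> typ ((y, A) :: G) (usubst B x (tv y)) (tc s2)) ->
    typ G (tpi x A B) (tc s3)
| typ_abs : forall G x y A B M s1 s2 s3, Rl s1 s2 s3 -> typ G A (tc s1) ->
    (forall z, ~ In z (dom G) -> typ ((z, A) :: G) (usubst B y (tv z)) (tc s2)) ->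
    (forall z, ~ In z (dom G) ->
       typ ((z, A) :: G) (usubst M x (tv z)) (usubst B y (tv z))) ->
    typ G (tlam x A M) (tpi y A B)
| typ_app : forall G M N x A B s, typ G M (tpi x A B) -> typ G N A ->
    typ G (usubst B x N) (tc s) -> typ G (tapp M N) (usubst B x N)
| typ_conv : forall G M A B s, typ G M A -> beta_conv A B -> typ G B (tc s) ->
    typ G M B.

End Typing.
End Action.
End PTS.

(* Main.v *)
Require Import Defs.
From Stdlib Require Import List Relations.
Import ListNotations.

Section Stoughton.
Variable V : VarType.
Variable C : Type.
Variable chi' : list nat -> nat.
Hypothesis Hchi : forall ns : list nat, ~ In (chi' ns) ns.

Local Notation T := (term V C).
Local Notation io := (iota V C).
Local Notation act := (act chi').

Lemma X'_fresh : forall l : list V, ~ In (X' V chi' l) l.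
Proof.
  intros l H. unfold X' in H. apply (Hchi (map (encode V) l)).
  rewrite <- (encode_decode V (chi' (map (encode V) l))). apply in_map. exact H.
Qed.

Lemma flat_map_ext_in {A B} (f g : A -> list B) l :
  (forall a, In a l -> f a = g a) -> flat_map f l = flat_map g l.
Proof.
  induction l; simpl; intros; auto. rewrite H by auto. f_equal. auto.
Qed.

Lemma flat_map_single (l : list V) : flat_map (fun w => [w]) l = l.
Proof. induction l; simpl; congruence. Qed.

Lemma flat_map_flat_map {A B D} (f : B -> list D) (g : A -> list B) l :
  flat_map f (flat_map g l) = flat_map (fun a => flat_map f (g a)) l.
Proof. induction l; simpl; auto. rewrite flat_map_app. congruence. Qed.

Lemma lminus_app (l1 l2 : list V) x : lminus V (l1 ++ l2) x = lminus V l1 x ++ lminus V l2 x.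
Proof. unfold lminus. apply remove_app. Qed.

Lemma in_lminus (l : list V) x w : In w (lminus V l x) <-> In w l /\ w <> x.
Proof. unfold lminus. split. intro H. apply in_remove in H. exact H.
  intros [H1 H2]. apply in_in_remove; auto. Qed.

Lemma lminus_notin (l : list V) y : ~ In y l -> lminus V l y = l.
Proof. unfold lminus. apply notin_remove. Qed.

Lemma upd_eq (s : subst V C) x N : upd s x N x = N.
Proof. unfold upd. destruct (veq_dec V x x); congruence. Qed.
Lemma upd_neq (s : subst V C) x N y : y <> x -> upd s x N y = s y.
Proof. unfold upd. destruct (veq_dec V y x); congruence. Qed.

Lemma key_remove (l : list V) (s : subst V C) x y :
  (forall w, In w (lminus V l x) -> ~ In y (fv (s w))) ->
  lminus V (flat_map (fun w => fv (upd s x (tv V C y) w)) l) y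
  = flat_map (fun w => fv (s w)) (lminus V l x).
Proof.
  induction l as [|a l IH]; intros H; simpl; auto.
  rewrite lminus_app.
  destruct (veq_dec V a x) as [e|n].
  - subst a. rewrite upd_eq. simpl.
    unfold lminus at 1. simpl. destruct (veq_dec V y y); [|congruence]. simpl.
    unfold lminus at 2. simpl. destruct (veq_dec V x x); [|congruence].
    apply IH. intros w Hw. apply H. apply in_lminus in Hw. apply in_lminus.
    simpl; intuition.
  - rewrite upd_neq by auto.
    unfold lminus at 3. simpl. destruct (veq_dec V x a); [congruence|]. simpl.
    rewrite lminus_notin.
    + f_equal. apply IH. intros w Hw. apply H. apply in_lminus in Hw. apply in_lminus.
      simpl; intuition.
    + apply H. apply in_lminus. simpl; auto.
Qed.

Lemma Xs_fresh (s : subst V C) l w y :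
  In w l -> y = Xs chi' s l -> ~ In y (fv (s w)).
Proof.
  intros Hw -> Hy. apply (X'_fresh (flat_map (fun y => fv (s y)) l)).
  apply in_flat_map. eauto.
Qed.

Lemma fv_act : forall (M : T) s, fv (act s M) = flat_map (fun w => fv (s w)) (fv M).
Proof.
  induction M; intros s; simpl; auto.
  - rewrite app_nil_r; auto.
  - rewrite flat_map_app, IHM1, IHM2. f_equal. apply key_remove.
    intros w Hw. eapply Xs_fresh; eauto.
  - rewrite flat_map_app, IHM1, IHM2. f_equal. apply key_remove.
    intros w Hw. eapply Xs_fresh; eauto.
  - rewrite flat_map_app, IHM1, IHM2. auto.
Qed.

Lemma act_ext : forall (M : T) s t, (forall w, In w (fv M) -> s w = t w) -> act s M = act t M.
Proof.
  induction M; intros s t H; simpl in *; try solve [auto | apply H; simpl; auto].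
  - assert (E : Xs chi' s (lminus V (fv M2) v) = Xs chi' t (lminus V (fv M2) v)).
    { unfold Xs. f_equal. apply flat_map_ext_in. intros a Ha. rewrite H; auto.
      apply in_or_app; auto. }
    rewrite E. f_equal; auto. apply IHM1. intros; apply H, in_or_app; auto.
    apply IHM2. intros w Hw. unfold upd. destruct (veq_dec V w v); auto.
    apply H. apply in_or_app. right. apply in_lminus; auto.
  - assert (E : Xs chi' s (lminus V (fv M2) v) = Xs chi' t (lminus V (fv M2) v)).
    { unfold Xs. f_equal. apply flat_map_ext_in. intros a Ha. rewrite H; auto.
      apply in_or_app; auto. }
    rewrite E. f_equal; auto. apply IHM1. intros; apply H, in_or_app; auto.
    apply IHM2. intros w Hw. unfold upd. destruct (veq_dec V w v); auto.
    apply H. apply in_or_app. right. apply in_lminus; auto.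
  - f_equal; [apply IHM1|apply IHM2]; intros; apply H, in_or_app; auto.
Qed.

Definition comp (s t : subst V C) : subst V C := fun w => act t (s w).

Lemma comp_binder (M : T) x (s t : subst V C) :
  Xs chi' t (lminus V (fv (act (upd s x (tv V C (Xs chi' s (lminus V (fv M) x)))) M))
                       (Xs chi' s (lminus V (fv M) x)))
  = Xs chi' (comp s t) (lminus V (fv M) x).
Proof.
  unfold Xs at 1. rewrite fv_act, key_remove.
  - rewrite flat_map_flat_map. unfold Xs. f_equal. apply flat_map_ext_in.
    intros a _. unfold comp. rewrite fv_act. auto.
  - intros w Hw. eapply Xs_fresh; eauto.
Qed.

Lemma act_comp : forall (M : T) s t, act t (act s M) = act (comp s t) M.
Proof.
  induction M; intros s t; simpl; auto.
  - rewrite comp_binder. f_equal; auto. rewrite IHM2. apply act_ext.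
    intros w Hw. unfold comp, upd. destruct (veq_dec V w v).
    + simpl. destruct (veq_dec V _ _); congruence.
    + apply act_ext. intros u Hu. destruct (veq_dec V u _); auto.
      subst u. exfalso. eapply Xs_fresh; [|reflexivity|exact Hu]. apply in_lminus; auto.
  - rewrite comp_binder. f_equal; auto. rewrite IHM2. apply act_ext.
    intros w Hw. unfold comp, upd. destruct (veq_dec V w v).
    + simpl. destruct (veq_dec V _ _); congruence.
    + apply act_ext. intros u Hu. destruct (veq_dec V u _); auto.
      subst u. exfalso. eapply Xs_fresh; [|reflexivity|exact Hu]. apply in_lminus; auto.
  - f_equal; auto.
Qed.


Lemma act_after_io (M : T) s : act s (act io M) = act s M.
Proof. rewrite act_comp. apply act_ext. intros; reflexivity. Qed.

Lemma nf_nf (M : T) : act io (act io M) = act io M.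
Proof. apply act_after_io. Qed.

Lemma fv_io (M : T) : fv (act io M) = fv M.
Proof. rewrite fv_act. apply flat_map_single. Qed.

Definition aeq (M N : T) := act io M = act io N.

Lemma aeq_act M N s : aeq M N -> act s M = act s N.
Proof. unfold aeq; intro H. rewrite <- (act_after_io M), <- (act_after_io N), H. auto. Qed.

Lemma aeq_fv M N : aeq M N -> fv M = fv N.
Proof. intro H. rewrite <- (fv_io M), <- (fv_io N), H. auto. Qed.

Lemma lminus_usubst (M : T) x y0 : ~ In y0 (lminus V (fv M) x) ->
  lminus V (fv (usubst chi' M x (tv V C y0))) y0 = lminus V (fv M) x.
Proof.
  intro H. unfold usubst. rewrite fv_act, key_remove.
  - apply flat_map_single.
  - intros w Hw Hin. simpl in Hin. destruct Hin as [->|[]]. auto.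
Qed.

Lemma rename_body (M : T) x y0 s P : ~ In y0 (lminus V (fv M) x) ->
  act (upd s y0 P) (usubst chi' M x (tv V C y0)) = act (upd s x P) M.
Proof.
  intro H. unfold usubst. rewrite act_comp. apply act_ext. intros w Hw.
  unfold comp, upd. destruct (veq_dec V w x).
  - simpl. destruct (veq_dec V y0 y0); congruence.
  - simpl. destruct (veq_dec V w y0); auto. subst. exfalso. apply H. apply in_lminus; auto.
Qed.

Lemma alpha_act : forall M N : T, alpha chi' M N -> forall s, act s M = act s N.
Proof.
  induction 1; intros s; simpl; auto.
  - f_equal; auto.
  - assert (E : lminus V (fv M) x = lminus V (fv M') x').
    { rewrite <- (lminus_usubst M x y), <- (lminus_usubst M' x' y) by auto. congruence. }
    rewrite E. f_equal; auto. rewrite <- (rename_body M x y), <- (rename_body M' x' y) by auto. congruence.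
  - assert (E : lminus V (fv M) x = lminus V (fv M') x').
    { rewrite <- (lminus_usubst M x y), <- (lminus_usubst M' x' y) by auto. congruence. }
    rewrite E. f_equal; auto. rewrite <- (rename_body M x y), <- (rename_body M' x' y) by auto. congruence.
Qed.

Lemma Xs_io_fresh (M : T) x : ~ In (Xs chi' io (lminus V (fv M) x)) (lminus V (fv M) x).
Proof. unfold Xs. simpl. rewrite flat_map_single. apply X'_fresh. Qed.

Lemma aeq_alpha : forall M N, aeq M N -> alpha chi' M N.
Proof.
  unfold aeq. induction M; intros N H; destruct N; simpl in H; try discriminate.
  - injection H as ->; constructor.
  - unfold io in H. injection H as ->; constructor.
  - injection H as E1 E2 E3.
    apply alpha_lam with (y := Xs chi' io (lminus V (fv M2) v)); auto.
    + apply Xs_io_fresh.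
    + rewrite E1. apply Xs_io_fresh.
    + unfold usubst. rewrite E3 at 1. rewrite E1. auto.
  - injection H as E1 E2 E3.
    apply alpha_pi with (y := Xs chi' io (lminus V (fv M2) v)); auto.
    + apply Xs_io_fresh.
    + rewrite E1. apply Xs_io_fresh.
    + unfold usubst. rewrite E3 at 1. rewrite E1. auto.
  - injection H as E1 E2. constructor; auto.
Qed.

Lemma alpha_iff M N : alpha chi' M N <-> aeq M N.
Proof. split. intro H; apply alpha_act; auto. apply aeq_alpha. Qed.


Local Notation conv := (beta_conv chi').

Lemma aeq_conv M N : aeq M N -> conv M N.
Proof. intro H. apply rst_step. left. apply alpha_iff. auto. Qed.

Lemma conv_cong (f : T -> T) :
  (forall M N, aeq M N -> aeq (f M) (f N)) ->
  (forall M N, beta chi' M N -> beta chi' (f M) (f N)) ->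
  forall M N, conv M N -> conv (f M) (f N).
Proof.
  intros Ha Hb M N H. induction H.
  - destruct H as [H|H].
    + apply aeq_conv, Ha, alpha_iff, H.
    + apply rst_step. right. auto.
  - apply rst_refl.
  - apply rst_sym; auto.
  - eapply rst_trans; eauto.
Qed.

Lemma Xs_io l : Xs chi' io l = X' V chi' l.
Proof. unfold Xs. simpl. rewrite flat_map_single. auto. Qed.

Lemma aeq_lam_body x A M N : aeq M N -> aeq (tlam x A M) (tlam x A N).
Proof. unfold aeq; intro H; simpl. rewrite (aeq_fv _ _ H). f_equal. apply aeq_act; auto. Qed.
Lemma aeq_pi_body x A M N : aeq M N -> aeq (tpi x A M) (tpi x A N).
Proof. unfold aeq; intro H; simpl. rewrite (aeq_fv _ _ H). f_equal. apply aeq_act; auto. Qed.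
Lemma aeq_lam_dom x A A' M : aeq A A' -> aeq (tlam x A M) (tlam x A' M).
Proof. unfold aeq; intro H; simpl. rewrite H. auto. Qed.
Lemma aeq_pi_dom x A A' M : aeq A A' -> aeq (tpi x A M) (tpi x A' M).
Proof. unfold aeq; intro H; simpl. rewrite H. auto. Qed.
Lemma aeq_appl M N P : aeq M N -> aeq (tapp M P) (tapp N P).
Proof. unfold aeq; intro H; simpl. rewrite H. auto. Qed.
Lemma aeq_appr M N P : aeq M N -> aeq (tapp P M) (tapp P N).
Proof. unfold aeq; intro H; simpl. rewrite H. auto. Qed.

Lemma fv_beta : forall M N : T, beta chi' M N -> forall u, In u (fv N) -> In u (fv M).
Proof.
  induction 1; intros u Hu; simpl in *; rewrite ?in_app_iff, ?in_lminus in *.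
  - destruct H. unfold usubst in Hu. rewrite fv_act in Hu. apply in_flat_map in Hu.
    destruct Hu as [w [Hw Hu]]. simpl. rewrite !in_app_iff, in_lminus.
    unfold upd in Hu. destruct (veq_dec V w x); auto.
    simpl in Hu. destruct Hu as [->|[]]. auto.
  - intuition.
  - intuition.
  - intuition.
  - intuition.
  - intuition.
  - intuition.
Qed.


Lemma binder_rename_gen (M : T) x s y y' :
  (forall w, In w (lminus V (fv M) x) -> ~ In y (fv (s w))) ->
  (forall w, In w (lminus V (fv M) x) -> ~ In y' (fv (s w))) ->
  X' V chi' (lminus V (fv (act (upd s x (tv V C y)) M)) y) =
  X' V chi' (lminus V (fv (act (upd s x (tv V C y')) M)) y') /\
  forall z, act (upd io y (tv V C z)) (act (upd s x (tv V C y)) M) =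
            act (upd io y' (tv V C z)) (act (upd s x (tv V C y')) M).
Proof.
  intros H1 H2. rewrite !fv_act, !key_remove by auto. split; auto.
  intro z. rewrite !act_comp. apply act_ext. intros w Hw. unfold comp.
  destruct (veq_dec V w x) as [->|n].
  - rewrite !upd_eq. simpl. rewrite !upd_eq. auto.
  - rewrite !upd_neq by auto.
    assert (Hw' : In w (lminus V (fv M) x)) by (apply in_lminus; auto).
    rewrite (act_ext (s w) (upd io y (tv V C z)) io), (act_ext (s w) (upd io y' (tv V C z)) io); auto.
    + intros u Hu. apply upd_neq. intros ->. apply (H2 w); auto.
    + intros u Hu. apply upd_neq. intros ->. apply (H1 w); auto.
Qed.

Lemma binder_rename_lam (M : T) x s y y' B :
  (forall w, In w (lminus V (fv M) x) -> ~ In y (fv (s w))) ->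
  (forall w, In w (lminus V (fv M) x) -> ~ In y' (fv (s w))) ->
  aeq (tlam y B (act (upd s x (tv V C y)) M)) (tlam y' B (act (upd s x (tv V C y')) M)).
Proof.
  intros H1 H2. destruct (binder_rename_gen M x s y y' H1 H2) as [E1 E2].
  unfold aeq. simpl. rewrite !Xs_io, E1, E2. auto.
Qed.

Lemma binder_rename_pi (M : T) x s y y' B :
  (forall w, In w (lminus V (fv M) x) -> ~ In y (fv (s w))) ->
  (forall w, In w (lminus V (fv M) x) -> ~ In y' (fv (s w))) ->
  aeq (tpi y B (act (upd s x (tv V C y)) M)) (tpi y' B (act (upd s x (tv V C y')) M)).
Proof.
  intros H1 H2. destruct (binder_rename_gen M x s y y' H1 H2) as [E1 E2].
  unfold aeq. simpl. rewrite !Xs_io, E1, E2. auto.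
Qed.

Lemma beta_subst : forall M N : T, beta chi' M N -> forall s, conv (act s M) (act s N).
Proof.
  induction 1; intro s.
  - destruct H. simpl. eapply rst_trans.
    + apply rst_step; right; apply beta_top; apply beta_contr_intro.
    + apply aeq_conv. unfold aeq, usubst. rewrite !act_comp. apply act_ext.
      intros w Hw. unfold comp. destruct (veq_dec V w x) as [->|n].
      * rewrite !upd_eq. simpl. rewrite !upd_eq. rewrite act_comp; reflexivity.
      * rewrite !upd_neq by auto. simpl. rewrite (act_ext (s w) _ io); [rewrite ?nf_nf; reflexivity|].
        intros u Hu. rewrite upd_neq; [reflexivity|]. intros ->. eapply Xs_fresh; [|reflexivity|exact Hu].
        apply in_lminus; auto.
  - simpl. match goal with |- conv (tlam ?y ?A ?P) (tlam ?y' _ ?P') =>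
      apply rst_trans with (tlam y A (act (upd s x (tv V C y)) M')) end.
    + apply (conv_cong (fun P => tlam _ _ P)); auto.
      intros; apply aeq_lam_body; auto. intros; apply beta_lam_body; auto.
    + apply aeq_conv, binder_rename_lam; intros w Hw.
      * eapply Xs_fresh; [|reflexivity]. apply in_lminus in Hw. apply in_lminus.
        intuition. eapply fv_beta; eauto.
      * eapply Xs_fresh; [exact Hw|reflexivity].
  - simpl. match goal with |- conv (tpi ?y ?A ?P) (tpi ?y' _ ?P') =>
      apply rst_trans with (tpi y A (act (upd s x (tv V C y)) M')) end.
    + apply (conv_cong (fun P => tpi _ _ P)); auto.
      intros; apply aeq_pi_body; auto. intros; apply beta_pi_body; auto.
    + apply aeq_conv, binder_rename_pi; intros w Hw.
      * eapply Xs_fresh; [|reflexivity]. apply in_lminus in Hw. apply in_lminus.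
        intuition. eapply fv_beta; eauto.
      * eapply Xs_fresh; [exact Hw|reflexivity].
  - simpl. apply (conv_cong (fun P => tlam _ P _)); auto.
    intros; apply aeq_lam_dom; auto. intros; apply beta_lam_dom; auto.
  - simpl. apply (conv_cong (fun P => tpi _ P _)); auto.
    intros; apply aeq_pi_dom; auto. intros; apply beta_pi_dom; auto.
  - simpl. apply (conv_cong (fun P => tapp P _)); auto.
    intros; apply aeq_appl; auto. intros; apply beta_appl; auto.
  - simpl. apply (conv_cong (fun P => tapp _ P)); auto.
    intros; apply aeq_appr; auto. intros; apply beta_appr; auto.
Qed.

Lemma conv_subst : forall M N : T, conv M N -> forall s, conv (act s M) (act s N).
Proof.
  induction 1; intro s.
  - destruct H as [H|H].
    + rewrite (alpha_act _ _ H s). apply rst_refl.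
    + apply beta_subst; auto.
  - apply rst_refl.
  - apply rst_sym. apply IHclos_refl_sym_trans.
  - eapply rst_trans; [apply IHclos_refl_sym_trans1|apply IHclos_refl_sym_trans2].
Qed.


Lemma aeq_tc (M' : T) k : aeq M' (tc V k) -> M' = tc V k.
Proof. unfold aeq. destruct M'; simpl; unfold iota; intro H; try discriminate; congruence. Qed.

Lemma aeq_tv (M' : T) y : aeq M' (tv V C y) -> M' = tv V C y.
Proof. unfold aeq. destruct M'; simpl; unfold iota; intro H; try discriminate; congruence. Qed.

Lemma io_nf_comp (s : subst V C) w : act io (comp s io w) = comp s io w.
Proof. unfold comp. apply nf_nf. Qed.

Lemma rename_nf (M : T) x z (rho : subst V C) P :
  (forall w, act io (rho w) = rho w) ->
  (forall w, In w (lminus V (fv M) x) -> ~ In z (fv (rho w))) ->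
  act (upd io z P) (act (upd rho x (tv V C z)) M) = act (upd rho x P) M.
Proof.
  intros Hn Hf. rewrite act_comp. apply act_ext. intros w Hw. unfold comp.
  destruct (veq_dec V w x) as [->|n].
  - rewrite !upd_eq. simpl. rewrite upd_eq. auto.
  - rewrite !upd_neq by auto. rewrite <- (Hn w) at 2. apply act_ext.
    intros u Hu. apply upd_neq. intros ->. apply (Hf w); auto. apply in_lminus; auto.
Qed.

Lemma body_inv (x' x : V) (B' B : T) (t : subst V C) :
  (forall w, act io (t w) = t w) ->
  Xs chi' io (lminus V (fv B') x') = Xs chi' t (lminus V (fv B) x) ->
  act (upd io x' (tv V C (Xs chi' io (lminus V (fv B') x')))) B'
    = act (upd t x (tv V C (Xs chi' t (lminus V (fv B) x)))) B ->
  forall P, act (upd io x' P) B' = act (upd t x P) B.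
Proof.
  intros Hn E1 E3 P.
  rewrite <- (rename_nf B' x' (Xs chi' io (lminus V (fv B') x'))) by
    (auto; intros w Hw; eapply Xs_fresh; eauto).
  rewrite <- (rename_nf B x (Xs chi' t (lminus V (fv B) x))) by
    (auto; intros w Hw; eapply Xs_fresh; eauto).
  rewrite E3, E1. auto.
Qed.

Lemma aeq_shape_pi (M' : T) s x A B : aeq M' (act s (tpi x A B)) ->
  exists x' A' B', M' = tpi x' A' B' /\ aeq A' (act s A) /\
    forall P, act (upd io x' P) B' = act (upd (comp s io) x P) B.
Proof.
  unfold aeq. rewrite act_comp. destruct M'; simpl; unfold iota; intro H; try discriminate.
  injection H as E1 E2 E3. exists v, M'1, M'2. split; auto. split.
  - rewrite E2, act_comp. auto.
  - apply body_inv; auto. intro w; apply io_nf_comp.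
Qed.

Lemma aeq_shape_lam (M' : T) s x A B : aeq M' (act s (tlam x A B)) ->
  exists x' A' B', M' = tlam x' A' B' /\ aeq A' (act s A) /\
    forall P, act (upd io x' P) B' = act (upd (comp s io) x P) B.
Proof.
  unfold aeq. rewrite act_comp. destruct M'; simpl; unfold iota; intro H; try discriminate.
  injection H as E1 E2 E3. exists v, M'1, M'2. split; auto. split.
  - rewrite E2, act_comp. auto.
  - apply body_inv; auto. intro w; apply io_nf_comp.
Qed.

Lemma aeq_shape_app (M' : T) s M N : aeq M' (act s (tapp M N)) ->
  exists M1 N1, M' = tapp M1 N1 /\ aeq M1 (act s M) /\ aeq N1 (act s N).
Proof.
  unfold aeq. destruct M'; simpl; unfold iota; intro H; try discriminate.
  injection H as E1 E2. exists M'1, M'2. auto.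
Qed.

Lemma aeq_refl (M : T) : aeq M M.
Proof. reflexivity. Qed.
Lemma aeq_sym (M N : T) : aeq M N -> aeq N M.
Proof. unfold aeq; auto. Qed.
Lemma aeq_trans (M N P : T) : aeq M N -> aeq N P -> aeq M P.
Proof. unfold aeq; congruence. Qed.


Variable Ax : C -> C -> Prop.
Variable Rl : C -> C -> C -> Prop.
Local Notation typ := (typ chi' Ax Rl).
Local Notation wf := (wf chi' Ax Rl).

Lemma typ_wf : forall G (M B : T), typ G M B -> wf G.
Proof. induction 1; auto. Qed.

Lemma in_dom (G : context V C) y Cc : In (y, Cc) G -> In y (dom G).
Proof. intro H. unfold dom. apply in_map_iff. exists (y, Cc); auto. Qed.

Lemma fv_typ : forall G (M B : T), typ G M B -> incl (fv M) (dom G).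
Proof.
  induction 1; simpl; intros u Hu; rewrite ?in_app_iff, ?in_lminus in Hu.
  - destruct Hu.
  - destruct Hu as [->|[]]. eapply in_dom; eauto.
  - destruct Hu as [Hu|[Hu Hne]]; auto.
    set (z := X' V chi' (u :: dom G)).
    assert (Hz : ~ In z (u :: dom G)) by apply X'_fresh.
    assert (Hz' : ~ In z (dom G)) by (intro; apply Hz; simpl; auto).
    specialize (H2 z Hz' u). simpl in H2. destruct H2.
    + unfold usubst. rewrite fv_act. apply in_flat_map. exists u. split; auto.
      rewrite upd_neq by auto. simpl. auto.
    + exfalso. apply Hz. left. congruence.
    + auto.
  - destruct Hu as [Hu|[Hu Hne]]; auto.
    set (z := X' V chi' (u :: dom G)).
    assert (Hz : ~ In z (u :: dom G)) by apply X'_fresh.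
    assert (Hz' : ~ In z (dom G)) by (intro; apply Hz; simpl; auto).
    specialize (H4 z Hz' u). simpl in H4. destruct H4.
    + unfold usubst. rewrite fv_act. apply in_flat_map. exists u. split; auto.
      rewrite upd_neq by auto. simpl. auto.
    + exfalso. apply Hz. left. congruence.
    + auto.
  - destruct Hu; auto.
  - auto.
Qed.

Lemma wf_fv : forall G, wf G -> forall y (Cc : T), In (y, Cc) G -> incl (fv Cc) (dom G).
Proof.
  induction 1; simpl; intros y Cc Hin; [destruct Hin|].
  destruct Hin as [E|Hin].
  - injection E as -> ->. intros u Hu. right. eapply fv_typ; eauto.
  - intros u Hu. right. eapply IHwf; eauto.
Qed.

Lemma incl_dom (G G' : context V C) : incl G G' -> incl (dom G) (dom G').
Proof. intros H. unfold dom. apply incl_map. auto. Qed.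

Lemma thinning : forall G (M B : T), typ G M B -> forall G', incl G G' -> wf G' -> typ G' M B.
Proof.
  induction 1; intros G' Hi Hw.
  - constructor; auto.
  - constructor; auto.
  - eapply typ_prod; eauto. intros z Hz. apply H2.
    + intro; apply Hz; eapply incl_dom; eauto.
    + apply incl_cons; [simpl; auto|]. apply incl_tl; auto.
    + eapply wf_cons; eauto.
  - eapply typ_abs; eauto.
    + intros z Hz. apply H2.
      * intro; apply Hz; eapply incl_dom; eauto.
      * apply incl_cons; [simpl; auto|]. apply incl_tl; auto.
      * eapply wf_cons; eauto.
    + intros z Hz. apply H4.
      * intro; apply Hz; eapply incl_dom; eauto.
      * apply incl_cons; [simpl; auto|]. apply incl_tl; auto.
      * eapply wf_cons; eauto.
  - eapply typ_app; eauto.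
  - eapply typ_conv; eauto.
Qed.


Definition WT (s : subst V C) (G D : context V C) :=
  wf D /\ forall y Cc, In (y, Cc) G -> forall M' B', aeq M' (s y) -> aeq B' (act s Cc) -> typ D M' B'.

Definition PP (G : context V C) (M B : T) :=
  forall s D, WT s G D -> forall M' B', aeq M' (act s M) -> aeq B' (act s B) -> typ D M' B'.

Lemma WT_thin s G D D' : WT s G D -> incl D D' -> wf D' -> WT s G D'.
Proof.
  intros [Hw H] Hi Hw'. split; auto. intros. eapply thinning; eauto.
Qed.

Lemma bind_aeq (M0 : T) x (M0' : T) x' s z0 u :
  ~ In z0 (fv M0) ->
  (forall Q, act (upd io x' Q) M0' = act (upd (comp s io) x Q) M0) ->
  aeq (usubst chi' M0' x' (tv V C u)) (act (upd s z0 (tv V C u)) (usubst chi' M0 x (tv V C z0))).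
Proof.
  intros Hz HQ. unfold aeq, usubst. rewrite !act_comp.
  transitivity (act (upd io x' (tv V C u)) M0').
  - apply act_ext. intros w _. unfold comp, upd. destruct (veq_dec V w x'); reflexivity.
  - rewrite HQ. apply act_ext. intros w Hw. unfold comp. destruct (veq_dec V w x) as [->|n].
    + rewrite !upd_eq. simpl. rewrite upd_eq. reflexivity.
    + rewrite !upd_neq by auto. simpl. rewrite upd_neq; auto. intros ->. auto.
Qed.

Lemma bind_step G (A : T) s1 s D (A' : T) x (M0 : T) y (T0 : T) x' (M0' : T) y' (T0' : T) :
  (forall z, ~ In z (dom G) -> PP ((z, A) :: G) (usubst chi' M0 x (tv V C z)) (usubst chi' T0 y (tv V C z))) ->
  PP G A (tc V s1) ->
  WT s G D -> aeq A' (act s A) ->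
  (forall Q, act (upd io x' Q) M0' = act (upd (comp s io) x Q) M0) ->
  (forall Q, act (upd io y' Q) T0' = act (upd (comp s io) y Q) T0) ->
  forall u, ~ In u (dom D) ->
  typ ((u, A') :: D) (usubst chi' M0' x' (tv V C u)) (usubst chi' T0' y' (tv V C u)).
Proof.
  intros IH IHA HWT HA HM HT u Hu.
  set (L := dom G ++ fv A ++ fv M0 ++ fv T0 ++ flat_map (fun p => fv (snd p)) G).
  set (z0 := X' V chi' L).
  assert (Hz : ~ In z0 L) by apply X'_fresh.
  unfold L in Hz. rewrite !in_app_iff in Hz.
  assert (HtA : typ D A' (tc V s1)).
  { apply (IHA s D HWT); auto. reflexivity. }
  assert (HwD : wf ((u, A') :: D)).
  { eapply wf_cons; eauto. destruct HWT; auto. }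
  assert (HWT' : WT s G ((u, A') :: D)).
  { eapply WT_thin; eauto. apply incl_tl, incl_refl. }
  apply (IH z0) with (s := upd s z0 (tv V C u)).
  - intuition.
  - split; auto. intros y0 Cc Hin M' B' HM' HB'. simpl in Hin. destruct Hin as [E|Hin].
    + injection E as <- <-. rewrite upd_eq in HM'. apply aeq_tv in HM'. subst M'.
      assert (EA : act (upd s z0 (tv V C u)) A = act s A).
      { apply act_ext. intros w Hw. apply upd_neq. intros ->. intuition. }
      rewrite EA in HB'.
      apply typ_conv with (A := A') (s := s1).
      * apply typ_var; simpl; auto.
      * apply aeq_conv. eapply aeq_trans; eauto. apply aeq_sym; auto.
      * apply (IHA s _ HWT'); auto. reflexivity.
    + assert (Hy0 : y0 <> z0).
      { intros ->. apply Hz. left. eapply in_dom; eauto. }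
      rewrite upd_neq in HM' by auto.
      assert (EC : act (upd s z0 (tv V C u)) Cc = act s Cc).
      { apply act_ext. intros w Hw. apply upd_neq. intros ->. apply Hz.
        right; right; right; right. apply in_flat_map. exists (y0, Cc). auto. }
      rewrite EC in HB'. destruct HWT' as [_ H]. eapply H; eauto.
  - apply bind_aeq; auto. intuition.
  - apply bind_aeq; auto. intuition.
Qed.


Lemma app_aeq (B N N1 : T) x s :
  aeq N1 (act s N) ->
  aeq (usubst chi' (act (upd s x (tv V C (Xs chi' s (lminus V (fv B) x)))) B)
         (Xs chi' s (lminus V (fv B) x)) N1)
      (act s (usubst chi' B x N)).
Proof.
  intro HN. unfold aeq, usubst. rewrite !act_comp. apply act_ext. intros w Hw.
  unfold comp. destruct (veq_dec V w x) as [->|n].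
  - rewrite !upd_eq. simpl. rewrite upd_eq. rewrite HN, act_comp. reflexivity.
  - rewrite !upd_neq by auto. simpl.
    rewrite (act_ext (s w) _ io); [rewrite ?nf_nf; reflexivity|].
    intros u Hu. rewrite upd_neq; [reflexivity|]. intros ->. eapply Xs_fresh; [|reflexivity|exact Hu].
    apply in_lminus; auto.
Qed.

Lemma main_subst : forall G (M B : T), typ G M B -> PP G M B.
Proof.
  induction 1; intros sg D HWT M' B' HM HB.
  -
    simpl in HM, HB. apply aeq_tc in HM. apply aeq_tc in HB. subst.
    constructor; auto. destruct HWT; auto.
  -
    destruct HWT as [_ H1]. eapply H1; eauto.
  -
    simpl in HB. apply aeq_tc in HB. subst B'.
    destruct (aeq_shape_pi _ _ _ _ _ HM) as (x1 & A1 & B1 & -> & HA1 & HB1).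
    apply typ_prod with (s1 := s1) (s2 := s2); auto.
    + apply (IHtyp sg D HWT); auto. reflexivity.
    + intros u Hu.
      exact (bind_step G A s1 sg D A1 x B x (tc V s2) x1 B1 x1 (tc V s2) H2 IHtyp HWT HA1 HB1
               (fun Q => eq_refl) u Hu).
  -
    destruct (aeq_shape_lam _ _ _ _ _ HM) as (x1 & A1 & M1 & -> & HA1 & HM1).
    destruct (aeq_shape_pi _ _ _ _ _ HB) as (y2 & A2 & B2 & -> & HA2 & HB2).
    assert (HtA2 : typ D (tpi y2 A2 B2) (tc V s3)).
    { apply typ_prod with (s1 := s1) (s2 := s2); auto.
      + apply (IHtyp sg D HWT); auto. reflexivity.
      + intros u Hu.
        exact (bind_step G A s1 sg D A2 y B y (tc V s2) y2 B2 y2 (tc V s2) H2 IHtyp HWT HA2 HB2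
               (fun Q => eq_refl) u Hu). }
    apply typ_conv with (A := tpi y2 A1 B2) (s := s3); auto.
    + apply typ_abs with (s1 := s1) (s2 := s2) (s3 := s3); auto.
      * apply (IHtyp sg D HWT); auto. reflexivity.
      * intros u Hu.
        exact (bind_step G A s1 sg D A1 y B y (tc V s2) y2 B2 y2 (tc V s2) H2 IHtyp HWT HA1 HB2
               (fun Q => eq_refl) u Hu).
      * intros u Hu.
        exact (bind_step G A s1 sg D A1 x M y B x1 M1 y2 B2 H4 IHtyp HWT HA1 HM1 HB2 u Hu).
    + apply aeq_conv, aeq_pi_dom. eapply aeq_trans; eauto. apply aeq_sym; auto.
  -
    destruct (aeq_shape_app _ _ _ _ HM) as (M1 & N1 & -> & HM1 & HN1).
    assert (HtM : typ D M1 (act sg (tpi x A B))).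
    { apply (IHtyp1 sg D HWT); auto. reflexivity. }
    assert (HtN : typ D N1 (act sg A)).
    { apply (IHtyp2 sg D HWT); auto. reflexivity. }
    simpl in HtM.
    apply typ_conv with (A := usubst chi' (act (upd sg x (tv V C (Xs chi' sg (lminus V (fv B) x)))) B)
         (Xs chi' sg (lminus V (fv B) x)) N1) (s := s).
    + eapply typ_app; eauto.
      apply (IHtyp3 sg D HWT); [apply app_aeq; auto | reflexivity].
    + apply aeq_conv. eapply aeq_trans. apply app_aeq; eauto. apply aeq_sym; auto.
    + apply (IHtyp3 sg D HWT); auto. reflexivity.
  -
    apply typ_conv with (A := act sg A) (s := s).
    + apply (IHtyp1 sg D HWT); auto. reflexivity.
    + eapply rst_trans. apply conv_subst; eauto. apply aeq_conv, aeq_sym; auto.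
    + apply (IHtyp2 sg D HWT); auto. reflexivity.
Qed.


Lemma aeq_nf (M : T) : aeq M (act io M).
Proof. unfold aeq. symmetry. apply nf_nf. Qed.

Lemma WT_id : forall G, wf G -> WT io G G.
Proof.
  induction 1.
  - split; [constructor|]. intros y Cc [].
  - assert (Hw' : wf ((x, A) :: G)) by (eapply wf_cons; eauto).
    split; auto. intros y Cc Hin M' B' HM HB. destruct Hin as [E|Hin].
    + injection E as <- <-. unfold iota in HM. apply aeq_tv in HM. subst M'.
      apply typ_conv with (A := A) (s := s).
      * apply typ_var; simpl; auto.
      * apply aeq_conv. eapply aeq_trans; [apply aeq_nf|]. apply aeq_sym; auto.
      * eapply thinning; [| apply incl_tl, incl_refl | auto].
        apply (main_subst _ _ _ H0 io G IHwf); auto. reflexivity.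
    + destruct IHwf as [_ IH]. eapply thinning; [eapply IH; eauto | apply incl_tl, incl_refl | auto].
Qed.

Lemma typ_aeq G (M B M' B' : T) : typ G M B -> aeq M' M -> aeq B' B -> typ G M' B'.
Proof.
  intros H HM HB. apply (main_subst _ _ _ H io G (WT_id _ (typ_wf _ _ _ H))).
  - eapply aeq_trans; eauto. apply aeq_nf.
  - eapply aeq_trans; eauto. apply aeq_nf.
Qed.

Lemma final G (M N A B : T) x :
  typ ((x, A) :: G) M B -> typ G N A -> typ G (usubst chi' M x N) (usubst chi' B x N).
Proof.
  intros H1 H2. pose proof (typ_wf _ _ _ H1) as Hwf.
  inversion Hwf as [|G0 x0 A0 s Hw HA Hx]; subst.
  apply (main_subst _ _ _ H1 (upd io x N) G); [| reflexivity | reflexivity].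
  split; auto. intros y Cc Hin M' B' HM HB. destruct Hin as [E|Hin].
  - injection E as <- <-. rewrite upd_eq in HM.
    assert (EA : act (upd io x N) A = act io A).
    { apply act_ext. intros w Hw'. apply upd_neq. intros ->. apply Hx. eapply fv_typ; eauto. }
    rewrite EA in HB. apply (typ_aeq G N A M' B' H2 HM). eapply aeq_trans; eauto. apply aeq_sym, aeq_nf.
  - assert (Hy : y <> x) by (intros ->; apply Hx; eapply in_dom; eauto).
    rewrite upd_neq in HM by auto. unfold iota in HM. apply aeq_tv in HM. subst M'.
    assert (EC : act (upd io x N) Cc = act io Cc).
    { apply act_ext. intros w Hw'. apply upd_neq. intros ->. apply Hx. eapply wf_fv; eauto. }
    rewrite EC in HB. eapply typ_aeq; [apply typ_var; eauto | apply aeq_refl |].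
    eapply aeq_trans; eauto. apply aeq_sym, aeq_nf.
Qed.

End Stoughton.

Theorem mainTheorem17 (V : VarType) (C : Type) (chi' : list nat -> nat)
  (Hchi : forall ns : list nat, ~ In (chi' ns) ns)
  (Ax : C -> C -> Prop) (Rl : C -> C -> C -> Prop)
  (G : context V C) (M N A B : term V C) (x : V) :
  typ chi' Ax Rl ((x, A) :: G) M B ->
  typ chi' Ax Rl G N A ->
  typ chi' Ax Rl G (usubst chi' M x N) (usubst chi' B x N).
Proof.
  apply final; auto.
Qed.
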